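(* For every $k\ge1$, the number of $\tau\in\mathcal{S}_k$ with $\mathcal{J}(\tau)=\{0,1,\ldots,k\}$ equals $2^{k-1}$.
   Context: The pattern of a word of $j$ distinct letters is its order-preserving relabeling by $\{1,\ldots,j\}$; the length-$j$ initial pattern of $\tau$ is the pattern of $\tau_1\ldots\tau_j$. The $j$-set $\mathcal{J}(\tau)$ of $\tau\in\mathcal{S}_k$ is the set consisting of $0$ together with all $j\in\{1,\ldots,k\}$ such that the length-$j$ initial pattern of $\tau$ is an involution in $\mathcal{S}_j$. *)

(* Defs.v *)
From mathcomp Require Import all_boot all_fingroup.
Set Implicit Arguments. Unset Strict Implicit. Unset Printing Implicit Defensive.

(* Positions and values are 0-based: tau : 'S_k permutes {0,...,k-1}. *)

(* tau viewed as a function on nat (0 outside {0,...,k-1}) *)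
Definition perm_nat (k : nat) (tau : 'S_k) (i : nat) : nat :=
  if insub i is Some o then val (tau o) else 0.

(* value at position i (< j) of the length-j initial pattern of tau:
   the rank (0-based) of tau_i among tau_0, ..., tau_{j-1}. *)
Definition init_pattern (k : nat) (tau : 'S_k) (j i : nat) : nat :=
  count (fun i' => perm_nat tau i' < perm_nat tau i) (iota 0 j).

Definition init_pattern_involution (k : nat) (tau : 'S_k) (j : nat) : bool :=
  all (fun i => init_pattern tau j (init_pattern tau j i) == i) (iota 0 j).

Definition jset (k : nat) (tau : 'S_k) : {set 'I_k.+1} :=
  [set j : 'I_k.+1 | (val j == 0) || init_pattern_involution tau (val j)].

(* Main.v *)
Require Import Defs.
From mathcomp Require Import all_boot all_fingroup.
From mathcomp Require Import zify.
Set Implicit Arguments. Unset Strict Implicit. Unset Printing Implicit Defensive.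

Lemma perm_natE k (t : 'S_k) (x : 'I_k) : perm_nat t x = t x.
Proof. by rewrite /perm_nat valK. Qed.

Lemma perm_nat_lt k (t : 'S_k) i : i < k -> perm_nat t i < k.
Proof. move=> H; have -> : i = val (Ordinal H) by []. by rewrite perm_natE. Qed.

Lemma perm_nat_inj k (t : 'S_k) a b : a < k -> b < k -> perm_nat t a = perm_nat t b -> a = b.
Proof.
move=> Ha Hb; have -> : a = val (Ordinal Ha) by [].
have -> : b = val (Ordinal Hb) by [].
rewrite !perm_natE => /val_inj /perm_inj -> //.
Qed.

Lemma perm_nat_lift k (s : 'S_k) (v : 'I_k.+1) i : i < k ->
  perm_nat (lift_perm ord_max v s) i = bump v (perm_nat s i).
Proof.
move=> H; have -> : i = val (lift ord_max (Ordinal H)) by rewrite /= /bump leqNgt H.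
have E : bump k i = i by rewrite /bump leqNgt H. by rewrite perm_natE lift_perm_lift /= E -(perm_natE s (Ordinal H)).
Qed.

Lemma perm_nat_liftk k (s : 'S_k) (v : 'I_k.+1) :
  perm_nat (lift_perm ord_max v s) k = v.
Proof.
have := perm_natE (lift_perm ord_max v s) ord_max.
by rewrite lift_perm_id.
Qed.

Lemma pat_lift k (s : 'S_k) (v : 'I_k.+1) j i : j <= k -> i < k ->
  init_pattern (lift_perm ord_max v s) j i = init_pattern s j i.
Proof.
move=> Hj Hi; rewrite /init_pattern; apply: eq_in_count => i' /=.
rewrite mem_iota add0n => /andP [_ Hi'].
rewrite !perm_nat_lift //; last by apply: leq_trans Hj.
by rewrite !ltnNge leq_bump2.
Qed.

Lemma pat_lt k (t : 'S_k) j i : i < j -> init_pattern t j i < j.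
Proof.
move=> H; rewrite /init_pattern.
have := count_predC (fun i' => perm_nat t i' < perm_nat t i) (iota 0 j).
rewrite size_iota.
have : 0 < count (predC (fun i' => perm_nat t i' < perm_nat t i)) (iota 0 j).
  rewrite -has_count; apply/hasP; exists i; first by rewrite mem_iota.
  by rewrite /= ltnn.
lia.
Qed.

Lemma inv_lift k (s : 'S_k) (v : 'I_k.+1) j : j <= k ->
  init_pattern_involution (lift_perm ord_max v s) j = init_pattern_involution s j.
Proof.
move=> Hj; rewrite /init_pattern_involution; apply: eq_in_all => i.
rewrite mem_iota add0n => /andP [_ Hi].
have Hik : i < k by apply: leq_trans Hj.
rewrite pat_lift // pat_lift //.
by apply: leq_trans (pat_lt s Hi) Hj.
Qed.

Lemma count_lt_iota c k : c <= k -> count (fun x => x < c) (iota 0 k) = c.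
Proof.
move=> H; rewrite -(subnKC H) iotaD count_cat.
rewrite (eq_in_count (a2 := predT)); last first.
  by move=> x; rewrite mem_iota => /andP [_ ->].
rewrite count_predT size_iota.
rewrite (eq_in_count (a2 := pred0)); last first.
  by move=> x; rewrite mem_iota add0n => /andP [Hx _]; rewrite /= ltnNge Hx.
by rewrite count_pred0 addn0.
Qed.

Lemma pat_full k (t : 'S_k) i : i < k -> init_pattern t k i = perm_nat t i.
Proof.
move=> Hi; rewrite /init_pattern.
have Hp : perm_eq (map (perm_nat t) (iota 0 k)) (iota 0 k).
  apply: uniq_perm; last first.
  - move=> x; rewrite mem_iota add0n; apply/mapP/idP.
      by move=> [a]; rewrite mem_iota add0n => /andP [_ Ha] ->; apply: perm_nat_lt.
    move=> Hx; exists (val ((t^-1)%g (Ordinal Hx))).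
      by rewrite mem_iota add0n /=.
    by rewrite perm_natE permKV.
  - exact: iota_uniq.
  rewrite map_inj_in_uniq ?iota_uniq //.
  move=> a b; rewrite !mem_iota !add0n => /andP [_ Ha] /andP [_ Hb].
  exact: perm_nat_inj.
have := (seq.permP Hp) (fun x => x < perm_nat t i).
rewrite count_map => E.
rewrite -[X in X = _]/(count (preim (perm_nat t) (fun x => x < perm_nat t i)) (iota 0 k)) E.
by rewrite count_lt_iota // ltnW // perm_nat_lt.
Qed.

Definition invn k (f : nat -> nat) := forall i, i < k -> f (f i) = i.

Lemma inv_full k (t : 'S_k) :
  init_pattern_involution t k <-> invn k (perm_nat t).
Proof.
rewrite /init_pattern_involution; split.
  move/allP => H i Hi; have := H i; rewrite mem_iota add0n Hi => /(_ isT).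
  by rewrite !pat_full // ?perm_nat_lt // => /eqP.
move=> H; apply/allP => i; rewrite mem_iota add0n => /andP [_ Hi].
by rewrite !pat_full ?perm_nat_lt // H.
Qed.

Definition good k (t : 'S_k) := forall j, 0 < j <= k -> init_pattern_involution t j.

Lemma inA k (t : 'S_k) : (jset t == [set: 'I_k.+1]) <-> good t.
Proof.
split.
  move/eqP => H j /andP [Hj0 Hjk].
  have : (Ordinal (Hjk : j < k.+1)) \in jset t by rewrite H inE.
  rewrite inE /= => /orP [/eqP j0|//]; by rewrite j0 in Hj0.
move=> H; apply/eqP/setP => j; rewrite !inE.
case j0: (val j == 0) => //=; apply: H; rewrite lt0n j0 /=.
by rewrite -ltnS ltn_ord.
Qed.

Lemma good_lift k (s : 'S_k) (v : 'I_k.+1) :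
  good (lift_perm ord_max v s) <-> good s /\ invn k.+1 (perm_nat (lift_perm ord_max v s)).
Proof.
split.
  move=> H; split; last by apply/inv_full/H; rewrite /= ltnSn.
  move=> j /andP [Hj0 Hjk]; rewrite -(inv_lift s v Hjk); apply: H.
  by rewrite Hj0 (leq_trans Hjk).
move=> [H1 H2] j /andP [Hj0 Hjk].
rewrite leq_eqVlt in Hjk; case/orP: Hjk => [/eqP ->|Hjk]; first exact/inv_full.
rewrite ltnS in Hjk; rewrite (inv_lift s v Hjk); apply: H1; by rewrite Hj0.
Qed.

Lemma decomp k (t : 'S_k.+1) : exists s : 'S_k, t = lift_perm ord_max (t ord_max) s.
Proof.
have Hne : forall x : 'I_k, t ord_max != t (lift ord_max x).
  by move=> x; rewrite (inj_eq perm_inj) neq_lift.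
pose g (x : 'I_k) := odflt x (unlift (t ord_max) (t (lift ord_max x))).
have gE : forall x, lift (t ord_max) (g x) = t (lift ord_max x).
  move=> x; rewrite /g; case: (unlift_some (Hne x)) => y -> ->.
  by [].
have ginj : injective g.
  move=> x y E; apply: (lift_inj (h := ord_max)); apply: (@perm_inj _ t).
  by rewrite -!gE E.
exists (perm ginj); apply/permP => x.
case: (unliftP ord_max x) => [y ->|->]; last by rewrite lift_perm_id.
by rewrite lift_perm_lift permE gE.
Qed.

Lemma good_invn k (s : 'S_k) : good s -> 0 < k -> invn k (perm_nat s).
Proof. by move=> H Hk; apply/inv_full/H; rewrite Hk leqnn. Qed.

Definition Blk k (s : 'S_k) := forall i, perm_nat s k.-1 <= i < k ->
  perm_nat s i = perm_nat s k.-1 + k.-1 - i.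

Lemma Blk_all k : 0 < k -> forall s : 'S_k, good s -> Blk s.
Proof.
elim: k => [//|k IH] _ t Ht i /andP [Hr Hi].
case: (posnP k) => [k0|kpos].
  subst k; have := perm_nat_lt t (ltn0Sn 0); have : i = 0 by lia.
  move=> -> /=; lia.
have [s Es] := decomp t.
set v := t ord_max in Es; clearbody v; subst t.
move: Ht => /good_lift [Hs Hinv].
move: Hr; rewrite /= perm_nat_liftk => Hr.
have Hv := ltn_ord v.
have Hinvs := good_invn Hs kpos.
have HB := IH kpos s Hs.
case: (ltngtP (nat_of_ord v) k) => [vk|vk|vk]; last first.
  have -> : i = k by lia.
  by rewrite perm_nat_liftk vk; lia.
1: by lia.
have := Hinv k (ltnSn k); rewrite perm_nat_liftk perm_nat_lift // => E1.
have Hsv := perm_nat_lt s vk.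
have Esv : perm_nat s v = k.-1 by move: E1; rewrite /bump; case: (v <= perm_nat s v); lia.
have Esk : perm_nat s k.-1 = v by rewrite -Esv Hinvs.
case: (ltngtP i k) => [ik|ik|->]; last by rewrite perm_nat_liftk; lia.
  2: by lia.
rewrite perm_nat_lift //.
have := HB i; rewrite Esk Hr ik => /(_ isT) ->.
rewrite /bump; have -> : v <= v + k.-1 - i by lia.
lia.
Qed.

Lemma bump_ge r x : r <= x -> bump r x = x.+1.
Proof. by move=> H; rewrite /bump H add1n. Qed.
Lemma bump_lt r x : x < r -> bump r x = x.
Proof. by move=> H; rewrite /bump leqNgt H. Qed.

Definition vsel k (s : 'S_k) (b : bool) : 'I_k.+1 :=
  if b then inord (perm_nat s k.-1) else ord_max.

Lemma ext_good k (s : 'S_k) b : 0 < k -> good s ->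
  good (lift_perm ord_max (vsel s b) s).
Proof.
move=> kpos Hs; apply/good_lift; split => //.
have Hinvs := good_invn Hs kpos.
case: b; rewrite /vsel; last first.
  move=> i; rewrite ltnS leq_eqVlt => /orP [/eqP ->|Hi].
    by rewrite !perm_nat_liftk.
  rewrite [perm_nat _ i]perm_nat_lift // bump_lt ?perm_nat_lt //.
  by rewrite perm_nat_lift ?perm_nat_lt // bump_lt ?perm_nat_lt // Hinvs.
have HB := Blk_all kpos Hs.
set r := perm_nat s k.-1.
have Hr : r < k by apply: perm_nat_lt; lia.
have Hri : (inord r : 'I_k.+1) = r :> nat by rewrite inordK // ltnW.
have fk : perm_nat (lift_perm ord_max (inord r) s) k = r by rewrite perm_nat_liftk.
have fi : forall i, i < k -> perm_nat (lift_perm ord_max (inord r) s) i = bump r (perm_nat s i).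
  by move=> i Hi; rewrite perm_nat_lift // Hri.
have small : forall i, i < r -> perm_nat s i < r.
  move=> i Hir; rewrite ltnNge; apply/negP => Hge.
  have Hik : i < k by lia.
  have Hj := perm_nat_lt s Hik.
  have := HB (perm_nat s i); rewrite -/r Hge Hj => /(_ isT).
  rewrite Hinvs //; lia.
move=> i; rewrite ltnS leq_eqVlt => /orP [/eqP ->|Hi].
  rewrite fk fi // (HB r); last by rewrite leqnn.
  rewrite bump_ge; lia.
case: (ltnP i r) => Hir.
  have Ha := small i Hir.
  rewrite [perm_nat _ i]fi // bump_lt // fi; last by lia.
  by rewrite bump_lt Hinvs // ?Hinvs //; lia.
rewrite [perm_nat _ i]fi // (HB i); last by rewrite Hir Hi.
rewrite bump_ge; last by lia.
case: (ltngtP i r) => [|//|Eir]; first by lia.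
  move=> Hgt.
  have -> : (r + k.-1 - i).+1 = r + k.-1 - (i.-1) by lia.
  rewrite fi; last by lia.
  rewrite (HB (r + k.-1 - i.-1)); last by lia.
  rewrite bump_ge; lia.
rewrite Eir; have -> : (r + k.-1 - r).+1 = k by lia.
by rewrite fk.
Qed.

Lemma classify k (s : 'S_k) v : 0 < k -> good s ->
  invn k.+1 (perm_nat (lift_perm ord_max v s)) -> v = vsel s false \/ v = vsel s true.
Proof.
move=> kpos Hs Hinv; have Hinvs := good_invn Hs kpos.
case: (ltngtP (nat_of_ord v) k) => [vk|vk|vk]; last first.
- by left; apply: val_inj; rewrite /= vk.
- by have := ltn_ord v; lia.
right.
have := Hinv k (ltnSn k); rewrite perm_nat_liftk perm_nat_lift // => E1.
have Hsv := perm_nat_lt s vk.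
have Esv : perm_nat s v = k.-1 by move: E1; rewrite /bump; case: (v <= perm_nat s v); lia.
have Esk : perm_nat s k.-1 = v by rewrite -Esv Hinvs.
apply: val_inj; rewrite /vsel /= Esk inordK //; lia.
Qed.

Definition Aset k := [set t : 'S_k | jset t == [set: 'I_k.+1]].

Definition Fm k (p : 'S_k * bool) : 'S_k.+1 := lift_perm ord_max (vsel p.1 p.2) p.1.

Lemma Fm_inj k : 0 < k -> injective (@Fm k).
Proof.
move=> kpos [s1 b1] [s2 b2]; rewrite /Fm /= => E.
have Ev : vsel s1 b1 = vsel s2 b2.
  by have := lift_perm_id ord_max (vsel s1 b1) s1; rewrite E lift_perm_id.
have Es : s1 = s2.
  apply/permP => x; apply: (lift_inj (h := vsel s1 b1)).
  rewrite -(lift_perm_lift ord_max (vsel s1 b1) s1) -(lift_perm_lift ord_max (vsel s1 b1) s2).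
  by rewrite E Ev.
subst s2; congr (_, _).
have H : perm_nat s1 k.-1 < k by apply: perm_nat_lt; lia.
clear E; move: Ev; rewrite /vsel; case: b1; case: b2 => // /(congr1 val) /=;
  rewrite inordK; lia.
Qed.

Lemma Aset_step k : 0 < k -> #|Aset k.+1| = 2 * #|Aset k|.
Proof.
move=> kpos.
have -> : Aset k.+1 = [set Fm p | p in setX (Aset k) [set: bool]].
  apply/setP => t; rewrite inE; apply/idP/imsetP.
    move/inA => Ht.
    have [s Es] := decomp t.
    set v := t ord_max in Es; clearbody v; subst t.
    move: (Ht) => /good_lift [Hs Hinv].
    case: (classify kpos Hs Hinv) => Ev.
      exists (s, false); first by rewrite !inE andbT; apply/inA.
      by rewrite /Fm /= Ev.
    exists (s, true); first by rewrite !inE andbT; apply/inA.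
    by rewrite /Fm /= Ev.
  move=> [[s b]]; rewrite inE /= => /andP [Hs _] ->.
  apply/inA; apply: ext_good => //; move: Hs; rewrite inE => /inA.
  done.
rewrite card_in_imset; last by move=> p q _ _; apply: Fm_inj.
by rewrite cardsX cardsT card_bool mulnC.
Qed.

Lemma Aset1 : #|Aset 1| = 1.
Proof.
have -> : Aset 1 = [set: 'S_1].
  apply/setP => t; rewrite !inE; apply/inA => j /andP [Hj0 Hj1].
  have -> : j = 1 by lia.
  by rewrite /init_pattern_involution /= /init_pattern /= !ltnn /= ?addn0 ?add0n ?ltnn.
by rewrite cardsE card_Sn.
Qed.

Theorem mainTheorem9 (k : nat) : 1 <= k ->
  #|[set tau : 'S_k | jset tau == [set: 'I_k.+1]]| = 2 ^ (k - 1).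
Proof.
rewrite -/(Aset k).
elim: k => [//|k IH] _.
case: (posnP k) => [->|kpos]; first by rewrite Aset1.
rewrite Aset_step // IH // subSS subn1 -expnS prednK //; congr (2 ^ _); lia.
Qed.
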